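(* Let $\mathcal A\subset\mathcal H$ be a left coideal subalgebra satisfying the biannihilator condition and let $\mu\in\mathcal A'$ be a non-zero multiplicative functional. Then: (1) if $\tilde\Lambda\in L^{\mathcal A}_\mu$ is non-zero and non-degenerate (i.e. $\mathcal V_{\tilde\Lambda}=\mathcal A$) and $\mu(\tilde\Lambda)\neq0$, then $L^{\mathcal A}_\mu=R^{\mathcal A}_\mu=k\tilde\Lambda$; (2) if $L^{\mathcal A}_\mu=k\hat\Lambda$ for some $0\neq\hat\Lambda\in L^{\mathcal A}_\mu$, then $\hat\Lambda$ is non-degenerate, i.e. $\mathcal V_{\hat\Lambda}=\mathcal A$. In particular, if $\mathcal A$ is a Frobenius algebra, then every non-zero element of $L^{\mathcal A}_\mu$ is non-degenerate.
   Context: $k$ is a field; $\mathcal H$ is a Hopf algebra over $k$ with comultiplication $\Delta$, counit $\varepsilon$, invertible antipode $S$, dual $\mathcal H'$. A left coideal subalgebra is a subalgebra $\mathcal A\ni1$ with $\Delta(\mathcal A)\subset\mathcal H\otimes\mathcal A$. For $\Lambda\in\mathcal H$, $\mathcal V_\Lambda=\{(\nu\otimes\mathrm{id})\Delta(\Lambda):\nu\in\mathcal H'\}$. For a multiplicative functional $\mu$ (linear, $\mu(ab)=\mu(a)\mu(b)$): $L^{\mathcal A}_\mu=\{\Lambda\in\mathcal A: a\Lambda=\mu(a)\Lambda\ \forall a\}$, $R^{\mathcal A}_\mu=\{\Lambda\in\mathcal A:\Lambda a=\mu(a)\Lambda\ \forall a\}$. For a left ideal $I\subset\mathcal A$, $r(I)=\{a\in\mathcal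 A: ba=0\ \forall b\in I\}$; for a right ideal $I'$, $l(I')=\{a\in\mathcal A: ab=0\ \forall b\in I'\}$. $\mathcal A$ satisfies the biannihilator condition if $l(r(I))=I$ for every left ideal $I$ and $r(l(I'))=I'$ for every right ideal $I'$. A finite-dimensional unital algebra is Frobenius if it admits a non-degenerate bilinear form $\sigma$ with $\sigma(ab,c)=\sigma(a,bc)$. *)

(* Defs.v *)
(* Elements of H (x) H (resp. H (x) H (x) H) are encoded
   as finite formal sums seq (H * H) (resp. seq (H * H * H)); two formal sums
   denote the same tensor iff every bilinear (resp. trilinear) form k-valued
   takes the same value on them (over a field, tensors are separated by
   the dual of the tensor product). *)
From HB Require Import structures.
From mathcomp Require Import all_boot all_order all_algebra.
Set Implicit Arguments. Unset Strict Implicit. Unset Printing Implicit Defensive.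
Import GRing.Theory.
Local Open Scope ring_scope.

Section HopfDefs.
Variables (k : fieldType) (H : algType k).

Definition lin (f : H -> k) : Prop :=
  forall (c : k) (x y : H), f (c *: x + y) = c * f x + f y.

Definition bilin (f : H -> H -> k) : Prop :=
  (forall a, lin (f a)) /\ (forall b, lin (fun a => f a b)).

Definition trilin (f : H -> H -> H -> k) : Prop :=
  (forall a b, lin (f a b)) /\ (forall a c, lin (fun b => f a b c))
  /\ (forall b c, lin (fun a => f a b c)).

Definition teq2 (s t : seq (H * H)) : Prop :=
  forall f, bilin f ->
    \sum_(p <- s) f p.1 p.2 = \sum_(p <- t) f p.1 p.2.

Definition teq3 (s t : seq (H * H * H)) : Prop :=
  forall f, trilin f ->
    \sum_(p <- s) f p.1.1 p.1.2 p.2 = \sum_(p <- t) f p.1.1 p.1.2 p.2.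

Definition tscale (c : k) (s : seq (H * H)) : seq (H * H) :=
  [seq (c *: p.1, p.2) | p <- s].

Definition tmul (s t : seq (H * H)) : seq (H * H) :=
  [seq (p.1 * q.1, p.2 * q.2) | p <- s, q <- t].

Definition DxI (D : H -> seq (H * H)) (s : seq (H * H)) : seq (H * H * H) :=
  [seq (q.1, q.2, p.2) | p <- s, q <- D p.1].
Definition IxD (D : H -> seq (H * H)) (s : seq (H * H)) : seq (H * H * H) :=
  [seq (p.1, q.1, q.2) | p <- s, q <- D p.2].

Definition is_hopf (D : H -> seq (H * H)) (e : H -> k) (S : H -> H) : Prop :=
  [/\ (forall c x y, teq2 (D (c *: x + y)) (tscale c (D x) ++ D y)),
      teq2 (D 1) [:: (1, 1)],
      (forall x y, teq2 (D (x * y)) (tmul (D x) (D y))),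
      (forall x, teq3 (DxI D (D x)) (IxD D (D x))) &
   [/\ lin e, e 1 = 1, (forall x y, e (x * y) = e x * e y),
      (forall x, \sum_(p <- D x) e p.1 *: p.2 = x) &
      (forall x, \sum_(p <- D x) e p.2 *: p.1 = x)]] /\
  [/\ (forall c x y, S (c *: x + y) = c *: S x + S y),
      (forall x, \sum_(p <- D x) S p.1 * p.2 = (e x)%:A),
      (forall x, \sum_(p <- D x) p.1 * S p.2 = (e x)%:A) &
      bijective S].

Definition subalg (A : H -> Prop) : Prop :=
  [/\ A 1, (forall x y, A x -> A y -> A (x + y)),
      (forall (c : k) x, A x -> A (c *: x)) &
      (forall x y, A x -> A y -> A (x * y))].

Definition left_coideal_subalg (D : H -> seq (H * H)) (A : H -> Prop) : Prop :=
  subalg A /\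
  (forall a, A a -> exists s : seq (H * H),
      teq2 (D a) s /\ (forall p, p \in s -> A p.2)).

Definition slice (nu : H -> k) (s : seq (H * H)) : H :=
  \sum_(p <- s) nu p.1 *: p.2.

Definition VLam (D : H -> seq (H * H)) (Lam : H) : H -> Prop :=
  fun x => exists nu, lin nu /\ x = slice nu (D Lam).

Definition nondeg (D : H -> seq (H * H)) (A : H -> Prop) (Lam : H) : Prop :=
  forall x, VLam D Lam x <-> A x.

(* mu in A' multiplicative (mu is given on H but only its values on A matter) *)
Definition mult_fun (A : H -> Prop) (mu : H -> k) : Prop :=
  (forall c x y, A x -> A y -> mu (c *: x + y) = c * mu x + mu y) /\
  (forall x y, A x -> A y -> mu (x * y) = mu x * mu y).

Definition Lmu (A : H -> Prop) (mu : H -> k) : H -> Prop :=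
  fun L => A L /\ forall a, A a -> a * L = mu a *: L.
Definition Rmu (A : H -> Prop) (mu : H -> k) : H -> Prop :=
  fun L => A L /\ forall a, A a -> L * a = mu a *: L.

Definition left_ideal (A I : H -> Prop) : Prop :=
  [/\ (forall x, I x -> A x), I 0, (forall x y, I x -> I y -> I (x - y)) &
      (forall a x, A a -> I x -> I (a * x))].
Definition right_ideal (A I : H -> Prop) : Prop :=
  [/\ (forall x, I x -> A x), I 0, (forall x y, I x -> I y -> I (x - y)) &
      (forall a x, A a -> I x -> I (x * a))].

Definition rann (A I : H -> Prop) : H -> Prop :=
  fun a => A a /\ forall b, I b -> b * a = 0.
Definition lann (A I : H -> Prop) : H -> Prop :=
  fun a => A a /\ forall b, I b -> a * b = 0.

Definition biannihilator (A : H -> Prop) : Prop :=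
  (forall I, left_ideal A I -> forall x, lann A (rann A I) x <-> I x) /\
  (forall I, right_ideal A I -> forall x, rann A (lann A I) x <-> I x).

Definition frobenius (A : H -> Prop) : Prop :=
  (exists s : seq H, (forall x, x \in s -> A x) /\
     forall a, A a -> exists cs : seq k,
       a = \sum_(i < size s) cs`_i *: s`_i) /\
  exists sigma : H -> H -> k,
    [/\ (forall a, A a -> forall c x y, A x -> A y ->
           sigma a (c *: x + y) = c * sigma a x + sigma a y),
        (forall b, A b -> forall c x y, A x -> A y ->
           sigma (c *: x + y) b = c * sigma x b + sigma y b),
        (forall a b c, A a -> A b -> A c -> sigma (a * b) c = sigma a (b * c)),
        (forall a, A a -> (forall c, A c -> sigma a c = 0) -> a = 0) &
        (forall c, A c -> (forall a, A a -> sigma a c = 0) -> c = 0)].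

End HopfDefs.

(* Main.v *)
Require Import Defs.
From HB Require Import structures.
From mathcomp Require Import all_boot all_order all_algebra.
From mathcomp Require Import boolp classical_sets ring.
Set Implicit Arguments. Unset Strict Implicit. Unset Printing Implicit Defensive.
Import GRing.Theory.
Local Open Scope ring_scope.

Section Lin.
Variables (k : fieldType) (H : algType k).

Lemma lin0 (f : H -> k) : lin f -> f 0 = 0.
Proof. move=> hf; have := hf 1 0 0; rewrite scale1r addr0 mul1r => e.
by apply: (@addrI _ (f 0)); rewrite addr0 -e. Qed.
Lemma linD (f : H -> k) x y : lin f -> f (x + y) = f x + f y.
Proof. by move=> hf; rewrite -[x in LHS]scale1r hf mul1r. Qed.
Lemma linZ (f : H -> k) c x : lin f -> f (c *: x) = c * f x.
Proof. by move=> hf; rewrite -[c *: x]addr0 hf lin0 // addr0. Qed.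
Lemma linN (f : H -> k) x : lin f -> f (- x) = - f x.
Proof. by move=> hf; rewrite -scaleN1r linZ // mulN1r. Qed.
Lemma linB (f : H -> k) x y : lin f -> f (x - y) = f x - f y.
Proof. by move=> hf; rewrite linD // linN. Qed.
Lemma lin_sum (f : H -> k) I (r : seq I) (F : I -> H) : lin f ->
  f (\sum_(i <- r) F i) = \sum_(i <- r) f (F i).
Proof. move=> hf; elim: r => [|i r IH]; first by rewrite !big_nil lin0.
by rewrite !big_cons linD // IH. Qed.

Section Sep.
Variable v : H.
Hypothesis v0 : v != 0.

Definition good (t : (H -> Prop) * (H -> k)) :=
  [/\ t.1 v, t.2 v = 1,
   (forall c x y, t.1 x -> t.1 y -> t.1 (c *: x + y)) &
   (forall c x y, t.1 x -> t.1 y -> t.2 (c *: x + y) = c * t.2 x + t.2 y)].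

Definition GT := {t | good t}.
Definition Rg (s t : GT) : bool :=
  `[< forall x, (sval s).1 x -> (sval t).1 x /\ (sval t).2 x = (sval s).2 x >].

Lemma good0 t : good t -> t.1 0.
Proof. case=> hv _ hc _; have := hc (-1) v v hv hv.
by rewrite scaleN1r addNr. Qed.

Definition f0 (x : H) : k :=
  match pselect (exists c, x = c *: v) with
  | left h => sval (cid h) | right _ => 0 end.

Lemma f0E c : f0 (c *: v) = c.
Proof.
rewrite /f0; case: pselect => [h|[]]; last by exists c.
case: (cid h) => d /= /eqP; rewrite -subr_eq0 -scalerBl scaler_eq0 (negbTE v0) orbF.
by rewrite subr_eq0 => /eqP.
Qed.

Lemma good_f0 : good ((fun x => exists c, x = c *: v), f0).
Proof.
split => /=.
- by exists 1; rewrite scale1r.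
- by rewrite -[v]scale1r f0E.
- by move=> c x y [a ->] [b ->]; exists (c * a + b); rewrite scalerDl scalerA.
- by move=> c x y [a ->] [b ->]; rewrite scalerA -scalerDl !f0E.
Qed.

Lemma sep_ex : exists f : H -> k, lin f /\ f v = 1.
Proof.
pose t0 : GT := exist _ _ good_f0.
have [||A totA|m mmax] := @ZL_preorder GT t0 Rg.
- by move=> t; apply/asboolP.
- move=> r s t /asboolP h1 /asboolP h2; apply/asboolP => x /h1 [/h2 [h3 h4] h5].
  by split => //; rewrite h4.
- have [[t1 At1]|nA] := pselect (exists t, A t); last first.
    by exists t0 => s As; case: nA; exists s.
  pose P x := exists t, A t /\ (sval t).1 x.
  pose f x := match pselect (P x) with
     | left h => (sval (sval (cid h))).2 x | right _ => 0 end.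
  have fE t x : A t -> (sval t).1 x -> f x = (sval t).2 x.
    move=> At tx; rewrite /f; case: pselect => [h|[]]; last by exists t.
    case: (cid h) => t' [At' t'x] /=.
    have [/asboolP h1|/asboolP h2] := totA _ _ At At'.
      by case: (h1 _ tx).
    by case: (h2 _ t'x) => _ ->.
  have both x y : P x -> P y -> exists t, [/\ A t, (sval t).1 x & (sval t).1 y].
    move=> [t [At tx]] [t' [At' t'y]].
    have [/asboolP h1|/asboolP h2] := totA _ _ At At'.
      by exists t'; split => //; case: (h1 _ tx).
    by exists t; split => //; case: (h2 _ t'y).
  have gU : good (P, f).
    split => /=.
    - by exists t1; split => //; case: (svalP t1).
    - by rewrite (fE t1) //; case: (svalP t1).
    - move=> c x y Px Py; have [t [At tx ty]] := both _ _ Px Py.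
      by exists t; split => //; case: (svalP t) => _ _ hc _; apply: (hc).
    - move=> c x y Px Py; have [t [At tx ty]] := both _ _ Px Py.
      have hc := svalP t; case: hc => _ _ hc hl.
      by rewrite !(fE t) //; [apply: (hl) | apply: (hc)].
  exists (exist _ _ gU) => s As; apply/asboolP => x sx /=.
  by split; [exists s | rewrite (fE s)].
- case: m mmax => [[Pm fm] gm] mmax.
  have hcl := gm; case: hcl => hv hfv hc hl.
  have allP : forall w, Pm w.
    move=> w; apply: contrapT => nw.
    have uniq p q c d : Pm p -> Pm q -> p + c *: w = q + d *: w -> p = q.
      move=> pp pq e; have [cd|cd] := eqVneq c d.
        by move: e; rewrite cd => /addIr.
      case: nw; have -> : w = (c - d)^-1 *: (q - p) + 0.
        rewrite addr0; apply: (@scalerI _ _ (c - d)); first by rewrite subr_eq0.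
        rewrite scalerA divff ?subr_eq0 // scale1r scalerBl.
        have e' : c *: w = q + d *: w - p by rewrite -e [p + _]addrC addrK.
        by rewrite e' addrAC addrK.
      apply: (hc); last exact: (good0 gm).
      by rewrite -[q - p]addrC -scaleN1r; apply: (hc).
    pose P' x := exists pc : H * k, Pm pc.1 /\ x = pc.1 + pc.2 *: w.
    pose f' x := match pselect (P' x) with
       | left h => fm (sval (cid h)).1 | right _ => 0 end.
    have f'E p c : Pm p -> f' (p + c *: w) = fm p.
      move=> pp; rewrite /f'; case: pselect => [h|[]]; last by exists (p, c).
      case: (cid h) => [[q d]] /= [pq e].
      by rewrite (uniq _ _ _ _ pq pp (esym e)).
    have gP : good (P', f').
      split => /=.
      - by exists (v, 0); rewrite scale0r addr0.
      - by rewrite -[v]addr0 -(scale0r w) f'E.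
      - move=> c x y [[p a] [/= pp ->]] [[q b] [/= pq ->]].
        exists (c *: p + q, c * a + b); split; first exact: hc.
        by rewrite /= scalerDr scalerDl scalerA addrACA.
      - move=> c x y [[p a] [/= pp ->]] [[q b] [/= pq ->]].
        rewrite scalerDr scalerA addrACA -scalerDl !f'E //; first exact: hl.
        exact: hc.
    have : Rg (exist _ _ gm) (exist _ _ gP).
      apply/asboolP => x /= px; split; first by exists (x, 0); rewrite /= scale0r addr0.
      by rewrite -[x in f' x]addr0 -(scale0r w) f'E.
    move=> /mmax /asboolP h.
    have Pw : P' w.
      exists (0, 1); split; first exact: (good0 gm).
      by rewrite /= add0r scale1r.
    by case: (h w Pw).
  exists fm; split => //.
  by move=> c x y; apply: (hl).
Qed.
End Sep.

Lemma sep (y : H) : y != 0 -> exists f : H -> k, lin f /\ f y != 0.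
Proof. move=> y0; have [f [hf fy]] := sep_ex y0; exists f; split => //.
by rewrite fy oner_neq0. Qed.

Lemma sepeq (x y : H) : (forall f : H -> k, lin f -> f x = f y) -> x = y.
Proof.
move=> h; apply/eqP; rewrite -subr_eq0; apply/negPn/negP => /sep [f [hf]].
by rewrite linB // h // subrr eqxx.
Qed.

End Lin.

Section TZ.
Variables (k : fieldType) (H : algType k).

Lemma tz (s : seq (H * H)) :
  (forall nu : H -> k, lin nu -> \sum_(p <- s) nu p.1 *: p.2 = 0) ->
  forall f : H -> H -> k, bilin f -> \sum_(p <- s) f p.1 p.2 = 0.
Proof.
have [n] := ubnP (size s); elim: n s => // n IH [|[a b] s'] /= hs hyp f hf.
  by rewrite big_nil.
have [hf1 hf2] := hf.
rewrite big_cons /=.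
have [b0|b0] := eqVneq b 0.
  rewrite b0 lin0 // add0r; apply: IH => // nu hnu.
  by have := hyp nu hnu; rewrite big_cons /= b0 scaler0 add0r.
have [psi [hpsi pb]] := sep b0.
pose c (p : H * H) := - psi p.2 / psi b.
have ha : a = \sum_(p <- s') c p *: p.1.
  apply: sepeq => nu hnu; rewrite lin_sum //.
  have := f_equal psi (hyp nu hnu); rewrite big_cons lin0 // linD // lin_sum // linZ //.
  under eq_bigr do rewrite linZ //.
  move=> e; apply: (mulIf pb).
  have -> : nu a * psi b = - \sum_(i <- s') nu i.1 * psi i.2.
    by apply/eqP; rewrite -addr_eq0 e.
  rewrite mulr_suml -sumrN; apply: eq_bigr => p _; rewrite linZ // /c.
  by field.
pose s'' := [seq (p.1, p.2 + c p *: b) | p <- s'].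
have hyp'' : forall nu : H -> k, lin nu -> \sum_(p <- s'') nu p.1 *: p.2 = 0.
  move=> nu hnu; rewrite big_map /=.
  under eq_bigr do rewrite scalerDr scalerA.
  rewrite big_split /= -scaler_suml.
  have := hyp nu hnu; rewrite big_cons /= ha lin_sum //.
  move=> e; rewrite addrC -[RHS]e; congr (_ + _).
  by congr (_ *: _); apply: eq_bigr => i _; rewrite (linZ _ _ hnu) mulrC.
have hsz : (size s'' < n)%N by rewrite size_map.
have := IH s'' hsz hyp'' f hf.
rewrite big_map /=.
under eq_bigr do rewrite (linD _ _ (hf1 _)) (linZ _ _ (hf1 _)).
rewrite big_split /= => e; rewrite -[RHS]e addrC; congr (_ + _).
rewrite ha (lin_sum _ _ (hf2 b)).
by apply: eq_bigr => p _; rewrite (linZ _ _ (hf2 b)).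
Qed.
End TZ.

Section Gen.
Variables (k : fieldType) (H : algType k).

Definition hlin (g : H -> H) := forall (c : k) x y, g (c *: x + y) = c *: g x + g y.

Lemma lin_comp (nu : H -> k) g : lin nu -> hlin g -> lin (fun x => nu (g x)).
Proof. by move=> hn hg c x y; rewrite hg hn. Qed.
Lemma hlin_mulr p : hlin (fun w : H => w * p).
Proof. by move=> c x y; rewrite mulrDl scalerAl. Qed.
Lemma hlin_mull p : hlin (fun w : H => p * w).
Proof. by move=> c x y; rewrite mulrDr scalerAr. Qed.
Lemma hlin_comp g1 g2 : hlin g1 -> hlin g2 -> hlin (fun x => g1 (g2 x)).
Proof. by move=> h1 h2 c x y; rewrite h2 h1. Qed.
Lemma lin_cst0 : lin (fun _ : H => (0 : k)).
Proof. by move=> c x y; rewrite mulr0 addr0. Qed.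
Lemma lin_scal (f : H -> k) (c : k) : lin f -> lin (fun x => c * f x).
Proof. by move=> hf a x y; rewrite hf mulrDr mulrCA. Qed.
Lemma lin_mulc (f : H -> k) (c : k) : lin f -> lin (fun x => f x * c).
Proof. by move=> hf a x y; rewrite hf mulrDl mulrA. Qed.
Lemma lin_add (f g : H -> k) : lin f -> lin g -> lin (fun x => f x + g x).
Proof. by move=> hf hg a x y; rewrite hf hg mulrDr addrACA. Qed.
Lemma lin_sub (f g : H -> k) : lin f -> lin g -> lin (fun x => f x - g x).
Proof. by move=> hf hg a x y; rewrite hf hg mulrBr opprD addrACA. Qed.
Lemma lin_sumf I (r : seq I) (F : I -> H -> k) : (forall i, lin (F i)) ->
  lin (fun x => \sum_(i <- r) F i x).
Proof.
move=> hF; elim: r => [|i r IH].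
  by move=> a x y; rewrite !big_nil mulr0 addr0.
move=> a x y; rewrite !big_cons hF IH mulrDr; ring.
Qed.
Lemma bilin_prod (a b : H -> k) : lin a -> lin b -> bilin (fun x y => a x * b y).
Proof. by move=> ha hb; split => ?; [apply: lin_scal | apply: lin_mulc]. Qed.
Lemma trilin_l (a : H -> k) (B : H -> H -> k) : lin a -> bilin B ->
  trilin (fun x y z => a x * B y z).
Proof.
move=> ha [hB1 hB2]; split; last split.
- by move=> x y; apply: lin_scal.
- by move=> x z; apply: lin_scal.
- by move=> y z; apply: lin_mulc.
Qed.
Lemma trilin_r (B : H -> H -> k) (a : H -> k) : bilin B -> lin a ->
  trilin (fun x y z => B x y * a z).
Proof.
move=> [hB1 hB2] ha; split; last split.
- by move=> x y; apply: lin_scal.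
- by move=> x z; apply: lin_mulc.
- by move=> y z; apply: lin_mulc.
Qed.

Lemma slice_eq (nu : H -> k) s t : lin nu -> teq2 s t -> slice nu s = slice nu t.
Proof.
move=> hnu hst; apply: sepeq => psi hpsi; rewrite /slice !lin_sum //.
have /= e := hst _ (bilin_prod hnu hpsi).
transitivity (\sum_(p <- s) nu p.1 * psi p.2).
  by apply: eq_bigr => p _; rewrite linZ.
by rewrite e; apply: eq_bigr => p _; rewrite linZ.
Qed.

End Gen.

Section Hopf.
Variables (k : fieldType) (H : algType k) (D : H -> seq (H * H)) (e : H -> k) (S : H -> H).
Hypothesis hH : is_hopf D e S.

Lemma hDlin c x y : teq2 (D (c *: x + y)) (tscale c (D x) ++ D y).
Proof. by case: hH => [[h]]. Qed.
Lemma hDm x y : teq2 (D (x * y)) (tmul (D x) (D y)).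
Proof. by case: hH => [[_ _ h]]. Qed.
Lemma hco x : teq3 (DxI D (D x)) (IxD D (D x)).
Proof. by case: hH => [[_ _ _ h]]. Qed.
Lemma hcl x : \sum_(p <- D x) e p.1 *: p.2 = x.
Proof. by case: hH => [[_ _ _ _ [_ _ _ h _]] _]. Qed.
Lemma hcr x : \sum_(p <- D x) e p.2 *: p.1 = x.
Proof. by case: hH => [[_ _ _ _ [_ _ _ _ h]] _]. Qed.
Lemma hS : hlin S.
Proof. by case: hH => [_ [h _ _ _]]. Qed.
Lemma hant x : \sum_(p <- D x) S p.1 * p.2 = (e x)%:A.
Proof. by case: hH => [_ [_ h _ _]]. Qed.

Lemma Dlin (F : H -> H -> k) : bilin F -> lin (fun a => \sum_(p <- D a) F p.1 p.2).
Proof.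
move=> hF c x y; rewrite (hDlin c x y hF) big_cat big_map /= mulr_sumr.
congr (_ + _); apply: eq_bigr => p _; case: hF => _ h2.
by have /= -> := linZ c p.1 (h2 p.2).
Qed.

Lemma DZ (F : H -> H -> k) c x : bilin F ->
  \sum_(p <- D (c *: x)) F p.1 p.2 = c * \sum_(p <- D x) F p.1 p.2.
Proof. by move=> hF; have /= -> := linZ c x (Dlin hF). Qed.

Lemma sum_tmul (F : H -> H -> k) s t :
  \sum_(p <- tmul s t) F p.1 p.2 =
  \sum_(p <- s) \sum_(q <- t) F (p.1 * q.1) (p.2 * q.2).
Proof. by rewrite /tmul big_allpairs_dep. Qed.
Lemma sum_DxI (K : H -> H -> H -> k) s :
  \sum_(t <- DxI D s) K t.1.1 t.1.2 t.2 =
  \sum_(p <- s) \sum_(q <- D p.1) K q.1 q.2 p.2.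
Proof. by rewrite /DxI big_allpairs_dep. Qed.
Lemma sum_IxD (K : H -> H -> H -> k) s :
  \sum_(t <- IxD D s) K t.1.1 t.1.2 t.2 =
  \sum_(p <- s) \sum_(q <- D p.2) K p.1 q.1 q.2.
Proof. by rewrite /IxD big_allpairs_dep. Qed.

Lemma coassoc (K : H -> H -> H -> k) x : trilin K ->
  \sum_(p <- D x) \sum_(q <- D p.1) K q.1 q.2 p.2 =
  \sum_(p <- D x) \sum_(q <- D p.2) K p.1 q.1 q.2.
Proof. by move=> hK; rewrite -sum_DxI -sum_IxD; apply: hco. Qed.

Lemma antE (y : H) x : \sum_(p <- D x) S p.1 * (p.2 * y) = e x *: y.
Proof.
transitivity ((\sum_(p <- D x) S p.1 * p.2) * y).
  by rewrite mulr_suml; apply: eq_bigr => p _; rewrite mulrA.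
by rewrite hant -scalerAl mul1r.
Qed.

Section WithA.
Variables (A : H -> Prop) (mu : H -> k).
Hypothesis hA : left_coideal_subalg D A.

Lemma A1 : A 1. Proof. by case: hA => [[h _ _ _] _]. Qed.
Lemma AD x y : A x -> A y -> A (x + y). Proof. by case: hA => [[_ h _ _] _]; apply: h. Qed.
Lemma AZ c x : A x -> A (c *: x). Proof. by case: hA => [[_ _ h _] _]; apply: h. Qed.
Lemma AM x y : A x -> A y -> A (x * y). Proof. by case: hA => [[_ _ _ h] _]; apply: h. Qed.
Lemma Aco x : A x -> exists s : seq (H * H), teq2 (D x) s /\ (forall p, p \in s -> A p.2).
Proof. by case: hA => _ h; apply: h. Qed.
Lemma A0 : A 0. Proof. by rewrite -(scale0r 1); apply: AZ; apply: A1. Qed.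
Lemma AB x y : A x -> A y -> A (x - y).
Proof. by move=> hx hy; rewrite addrC -scaleN1r; apply: AD => //; apply: AZ. Qed.
Lemma Asum (I : eqType) (r : seq I) (g : I -> H) : (forall i, i \in r -> A (g i)) ->
  A (\sum_(i <- r) g i).
Proof.
elim: r => [|i r IH] h; first by rewrite big_nil; apply: A0.
rewrite big_cons; apply: AD; first by apply: h; rewrite mem_head.
by apply: IH => j hj; apply: h; rewrite in_cons hj orbT.
Qed.

Lemma VA L nu : A L -> lin nu -> A (slice nu (D L)).
Proof.
move=> hL hnu; have [s [hs hsA]] := Aco hL.
rewrite (slice_eq hnu hs) /slice; apply: Asum => p hp; apply: AZ; exact: hsA.
Qed.
Lemma Vmul L a nu : Lmu A mu L -> A a -> lin nu -> VLam D L (a * slice nu (D L)).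
Proof.
move=> [hL hLm] ha hnu; have [s [hs hsA]] := Aco ha.
pose nu' h := \sum_(q <- s) mu q.2 * nu (S q.1 * h).
exists nu'; split.
  apply: lin_sumf => q; apply: lin_scal; apply: lin_comp => //; apply: hlin_mull.
apply: sepeq => psi hpsi.
rewrite /slice mulr_sumr !lin_sum //.
transitivity (\sum_(p <- D L) nu p.1 * psi (a * p.2)).
  by apply: eq_bigr => p _; rewrite -scalerAr linZ.
symmetry.
transitivity (\sum_(q <- s) \sum_(r <- D q.2) \sum_(p <- D L)
     nu (S q.1 * (r.1 * p.1)) * psi (r.2 * p.2)).
  rewrite (eq_bigr (fun p => \sum_(q <- s) mu q.2 * (nu (S q.1 * p.1) * psi p.2))); last first.
    by move=> p _; rewrite linZ // /nu' mulr_suml; apply: eq_bigr => q _; rewrite mulrA.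
  rewrite exchange_big /=; apply: eq_big_seq => q hq; rewrite -mulr_sumr.
  have hG : bilin (fun u w => nu (S q.1 * u) * psi w).
    exact: bilin_prod (lin_comp hnu (hlin_mull _)) hpsi.
  rewrite -(DZ _ _ hG) -(hLm _ (hsA _ hq)) (hDm _ _ hG).
  by rewrite /tmul big_allpairs_dep /=.
rewrite (eq_bigr (fun q => \sum_(p <- D L) \sum_(r <- D q.2)
     nu (S q.1 * (r.1 * p.1)) * psi (r.2 * p.2))); last first.
  by move=> q _; rewrite exchange_big.
rewrite exchange_big /=; apply: eq_bigr => p _.
have hB : bilin (fun u v => nu (S u * (v * p.1))).
  split => [u|v].
    exact: lin_comp hnu (hlin_comp (hlin_mull _) (hlin_mulr _)).
  exact: lin_comp hnu (hlin_comp (hlin_mulr _) hS).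
have hK1 : forall u, bilin (fun v w => nu (S u * (v * p.1)) * psi (w * p.2)).
  move=> u; apply: bilin_prod; first by case: hB => h _; apply: h.
  exact: lin_comp hpsi (hlin_mulr _).
have hg : bilin (fun u w => \sum_(r <- D w) nu (S u * (r.1 * p.1)) * psi (r.2 * p.2)).
  split => [u|w]; first exact: Dlin (hK1 u).
  apply: lin_sumf => r; apply: lin_mulc; case: hB => _ h; apply: h.
have hKt : trilin (fun u v w => nu (S u * (v * p.1)) * psi (w * p.2)).
  exact: trilin_r hB (lin_comp hpsi (hlin_mulr _)).
transitivity (\sum_(q <- D a) \sum_(r <- D q.2) nu (S q.1 * (r.1 * p.1)) * psi (r.2 * p.2)).
  exact: (esym (hs _ hg)).
transitivity (\sum_(q <- D a) \sum_(t <- D q.1) nu (S t.1 * (t.2 * p.1)) * psi (q.2 * p.2)).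
  exact: (esym (coassoc a hKt)).
transitivity (nu p.1 * psi ((\sum_(q <- D a) e q.1 *: q.2) * p.2)); last by rewrite hcl.
rewrite mulr_suml lin_sum // mulr_sumr; apply: eq_bigr => q _.
rewrite -mulr_suml -(lin_sum _ _ hnu) antE linZ // -scalerAl linZ //.
by rewrite mulrCA mulrA.
Qed.
Lemma rV0 L x : L != 0 -> (forall b, VLam D L b -> b * x = 0) -> x = 0.
Proof.
move=> L0 hV.
have tz0 : forall F : H -> H -> k, bilin F -> \sum_(p <- D L) F p.1 (p.2 * x) = 0.
  move=> F hF.
  have := @tz _ _ [seq (p.1, p.2 * x) | p <- D L] _ F hF; rewrite big_map; apply.
  move=> nu hnu; rewrite big_map /=.
  have := hV (slice nu (D L)) (ex_intro _ nu (conj hnu erefl)).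
  rewrite /slice mulr_suml => e1; rewrite -[RHS]e1; apply: eq_bigr => p _; by rewrite scalerAl.
have key : forall phi psi : H -> k, lin phi -> lin psi -> phi L * psi x = 0.
  move=> phi psi hphi hpsi.
  have hF : bilin (fun u w => \sum_(q <- D u) phi q.1 * psi (S q.2 * w)).
    split => [u|w].
      apply: lin_sumf => q; apply: lin_scal; exact: lin_comp hpsi (hlin_mull _).
    exact: Dlin (bilin_prod hphi (lin_comp hpsi (hlin_comp (hlin_mulr w) hS))).
  have hB : bilin (fun v w => psi (S v * (w * x))).
    split => [v|w].
      exact: lin_comp hpsi (hlin_comp (hlin_mull _) (hlin_mulr _)).
    exact: lin_comp hpsi (hlin_comp (hlin_mulr _) hS).
  have hK : trilin (fun u v w => phi u * psi (S v * (w * x))) := trilin_l hphi hB.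
  have e0 := tz0 _ hF.
  have e1 : \sum_(p <- D L) \sum_(q <- D p.1) phi q.1 * psi (S q.2 * (p.2 * x)) = 0 := e0.
  rewrite (coassoc L hK) in e1; rewrite -e1 -{1}(hcr L) lin_sum // mulr_suml.
  apply: eq_bigr => p _; rewrite -mulr_sumr -lin_sum // antE !linZ //.
  by rewrite mulrCA mulrA.
have [phi [hphi phL]] := sep L0.
apply: sepeq => psi hpsi; rewrite lin0 //.
by apply/eqP; have := key _ _ hphi hpsi => /eqP; rewrite mulf_eq0 (negbTE phL).
Qed.

Lemma nondegL L : (forall I, left_ideal A I -> forall x, lann A (rann A I) x <-> I x) ->
  Lmu A mu L -> L != 0 -> nondeg D A L.
Proof.
move=> hbi hLm L0; have hL := hLm; case: hL => hL _.
have hI : left_ideal A (VLam D L).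
  split.
  - by move=> x [nu [hnu ->]]; apply: VA.
  - exists (fun _ => 0); split; first exact: lin_cst0.
    by rewrite /slice big1 // => p _; rewrite scale0r.
  - move=> x y [nu [hnu ->]] [nu' [hnu' ->]].
    exists (fun h => nu h - nu' h); split; first exact: lin_sub.
    by rewrite /slice -sumrB; apply: eq_bigr => p _; rewrite scalerBl.
  - by move=> a x ha [nu [hnu ->]]; apply: Vmul.
move=> x; split; first by move=> [nu [hnu ->]]; apply: VA.
move=> hx; apply/(hbi _ hI); split => // b [hb hbV].
by rewrite (rV0 L0 hbV) mulr0.
Qed.
End WithA.
End Hopf.

Section Part1.
Variables (k : fieldType) (H : algType k) (A : H -> Prop) (mu : H -> k).
Hypothesis hsub : subalg A.
Hypothesis hmu : mult_fun A mu.
Hypothesis hbi2 : forall I, right_ideal A I -> forall x, rann A (lann A I) x <-> I x.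

Let sA1 : A 1. Proof. by case: hsub. Qed.
Let sAD x y : A x -> A y -> A (x + y). Proof. by case: hsub => _ h _ _; apply: h. Qed.
Let sAZ c x : A x -> A (c *: x). Proof. by case: hsub => _ _ h _; apply: h. Qed.
Let sAM x y : A x -> A y -> A (x * y). Proof. by case: hsub => _ _ _ h; apply: h. Qed.
Let sA0 : A 0. Proof. by rewrite -(scale0r 1); apply: sAZ. Qed.
Let sAB x y : A x -> A y -> A (x - y).
Proof. by move=> hx hy; rewrite addrC -scaleN1r; apply: sAD => //; apply: sAZ. Qed.
Let muL c x y : A x -> A y -> mu (c *: x + y) = c * mu x + mu y.
Proof. by case: hmu => h _; apply: h. Qed.
Let muM x y : A x -> A y -> mu (x * y) = mu x * mu y.
Proof. by case: hmu => _ h; apply: h. Qed.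
Let mu0 : mu 0 = 0.
Proof. have := muL 1 sA0 sA0; rewrite scale1r addr0 mul1r => e0.
by apply: (@addrI _ (mu 0)); rewrite addr0 -e0. Qed.
Let muB x y : A x -> A y -> mu (x - y) = mu x - mu y.
Proof. by move=> hx hy; rewrite addrC -scaleN1r muL // mulN1r addrC. Qed.
Let muZ c x : A x -> mu (c *: x) = c * mu x.
Proof. by move=> hx; rewrite -[c *: x]addr0 muL // mu0 addr0. Qed.

Lemma part1 Lt : Lmu A mu Lt -> Lt <> 0 -> mu Lt <> 0 ->
  forall x, (Lmu A mu x <-> Rmu A mu x) /\ (Lmu A mu x <-> exists c : k, x = c *: Lt).
Proof.
move=> [hLt hLtL] /eqP Lt0 /eqP mL0.
have Z : forall z, Lmu A mu z -> mu z = 0 -> z = 0.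
  move=> z [hz hzL] mz; case: (eqVneq z 0) => // z0; exfalso.
  pose I y := exists b, A b /\ y = z * b.
  have hI : right_ideal A I.
    split.
    - by move=> y [b [hb ->]]; apply: sAM.
    - by exists 0; split => //; rewrite mulr0.
    - by move=> x y [b [hb ->]] [b' [hb' ->]]; exists (b - b'); split;
        [apply: sAB | rewrite mulrBr].
    - by move=> a y ha [b [hb ->]]; exists (b * a); split; [apply: sAM | rewrite mulrA].
  have [hb _] := hbi2 hI Lt.
  have : I Lt.
    apply: hb; split => // b [hbA hbI].
    have := hbI z (ex_intro _ 1 (conj sA1 (esym (mulr1 z)))).
    rewrite (hzL b hbA) => /eqP; rewrite scaler_eq0 (negbTE z0) orbF => /eqP mb.
    by rewrite (hLtL b hbA) mb scale0r.
  move=> [b [hbA eL]]; move: mL0; rewrite eL muM // mz mul0r.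
  by rewrite eqxx.
have LL : forall x, Lmu A mu x -> x = (mu x / mu Lt) *: Lt.
  move=> x [hx hxL]; apply/eqP; rewrite -subr_eq0; apply/eqP; apply: Z.
    split; first by apply: sAB => //; apply: sAZ.
    move=> a ha; rewrite mulrBr -scalerAr hxL // hLtL // scalerA mulrC -scalerA.
    by rewrite scalerBr !scalerA.
  by rewrite muB ?muZ //; [rewrite divfK // subrr | apply: sAZ].
have LS : forall c, Lmu A mu (c *: Lt).
  move=> c; split; first by apply: sAZ.
  by move=> a ha; rewrite -scalerAr hLtL // !scalerA mulrC.
have LtR : Rmu A mu Lt.
  split => // a ha.
  have hLa : Lmu A mu (Lt * a).
    split; first by apply: sAM.
    by move=> b hb; rewrite mulrA hLtL // -scalerAl.
  by rewrite (LL _ hLa) muM // mulrAC divff // mul1r.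
have RS : forall c, Rmu A mu (c *: Lt).
  move=> c; split; first by apply: sAZ.
  by move=> a ha; case: LtR => _ h; rewrite -scalerAl h // !scalerA mulrC.
have RL : forall x, Rmu A mu x -> x = (mu x / mu Lt) *: Lt.
  move=> x [hx hxR].
  have e1 : mu Lt *: x = mu x *: Lt by rewrite -hxR // hLtL.
  transitivity ((mu Lt)^-1 *: (mu Lt *: x)); first by rewrite scalerA mulVf // scale1r.
  by rewrite e1 scalerA mulrC.
move=> x; split; split.
- by move=> /LL ->.
- by move=> /RL ->.
- by move=> /LL ->; eexists.
- by move=> [c ->].
Qed.
End Part1.

Unset Implicit Arguments.

Theorem mainTheorem10 (k : fieldType) (H : algType k)
  (D : H -> seq (H * H)) (e : H -> k) (S : H -> H)
  (hH : is_hopf D e S)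
  (A : H -> Prop) (hA : left_coideal_subalg D A) (hbi : biannihilator A)
  (mu : H -> k) (hmu : mult_fun A mu) (hmu0 : exists a, A a /\ mu a <> 0) :
  (forall Lt : H, Lmu A mu Lt -> Lt <> 0 -> nondeg D A Lt -> mu Lt <> 0 ->
     forall x, (Lmu A mu x <-> Rmu A mu x) /\
               (Lmu A mu x <-> exists c : k, x = c *: Lt)) /\
  (forall Lh : H, Lmu A mu Lh -> Lh <> 0 ->
     (forall x, Lmu A mu x <-> exists c : k, x = c *: Lh) ->
     nondeg D A Lh) /\
  (frobenius A -> forall L : H, Lmu A mu L -> L <> 0 -> nondeg D A L).
Proof.
have [hsub _] := hA; have [hb1 hb2] := hbi.
split; [|split].
- move=> Lt hLt Lt0 _ mLt x; exact: (part1 hsub hmu hb2 hLt Lt0 mLt).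
- move=> Lh hLh /eqP Lh0 _; exact: (nondegL hH hA hb1 hLh Lh0).
- move=> _ L hL /eqP L0; exact: (nondegL hH hA hb1 hL L0).
Qed.
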